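(* Let $n,m,q\ge1$ be integers. Identify the space of polynomial maps $\mathbb{R}^n\to\mathbb{R}^m$ of degree $\le q$ vanishing at $0$ with $\mathbb{R}^l$ via coefficients $a=(a_\iota)_{0<|\iota|\le q}$, $a_\iota\in\mathbb{R}^m$, and set $f(a,x)=\sum_\iota a_\iota x^\iota$. Then \[ E=\{a\in\mathbb{R}^l\;:\; f(a,\cdot)\text{ has a local Pareto optimum at }0\} \] is a semialgebraic subset of $\mathbb{R}^l$.
   Context: A subset of $\mathbb{R}^N$ is semialgebraic if it is a finite union of sets each defined by finitely many polynomial equations and strict polynomial inequalities. For $g=(g_1,\dots,g_m):U\to\mathbb{R}^m$, a point $x$ dominates $y$ if $g_i(x)\ge g_i(y)$ for all $i$ and $g_j(x)>g_j(y)$ for some $j$; $p$ is a Pareto optimum on a set if no point of the set dominates it; $p$ is a local Pareto optimum if there is a neighborhood of $p$ on which $p$ is a Pareto optimum. *)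

(* Defs.v *)
From HB Require Import structures.
From mathcomp Require Import all_boot all_order all_algebra.
From mathcomp Require Import reals.
From mathcomp Require Import mpoly.

Set Implicit Arguments.
Unset Strict Implicit.
Unset Printing Implicit Defensive.

Import Order.TTheory GRing.Theory Num.Theory.
Local Open Scope ring_scope.

Section Defs.
Variable R : realType.

Definition basic_sa_pt (N : nat) (PQ : seq {mpoly R[N]} * seq {mpoly R[N]})
  (x : 'I_N -> R) : bool :=
  all (fun p => p.@[x] == 0) PQ.1 && all (fun p => 0 < p.@[x]) PQ.2.

Definition semialgebraic (N : nat) (S : ('I_N -> R) -> Prop) : Prop :=
  exists s : seq (seq {mpoly R[N]} * seq {mpoly R[N]}),
    forall x, S x <-> has (fun PQ => basic_sa_pt PQ x) s.

Definition semialgebraicT (I : finType) (S : (I -> R) -> Prop) : Prop :=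
  semialgebraic (fun y : 'I_#|I| -> R => S (fun i => y (enum_rank i))).

Definition dominates (n m : nat) (g : ('I_n -> R) -> ('I_m -> R))
  (x y : 'I_n -> R) : Prop :=
  (forall i, g y i <= g x i) /\ (exists j, g y j < g x j).

Definition local_pareto (n m : nat) (g : ('I_n -> R) -> ('I_m -> R))
  (p : 'I_n -> R) : Prop :=
  exists2 eps : R, 0 < eps &
    forall x : 'I_n -> R, (forall i, `|x i - p i| < eps) -> ~ dominates g x p.
End Defs.

(** Multi-indices iota in N^n with 0 < |iota| <= q (each entry is <= q). *)
Definition Mon (n q : nat) : finType :=
  {e : {ffun 'I_n -> 'I_q.+1} | (0 < \sum_(i < n) (e i : nat) <= q)%N}.

(** f(a, x) = sum_iota a_iota x^iota, with a_iota in R^m stored as a(iota, j). *)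
Definition fpoly (R : realType) (n m q : nat) (a : Mon n q * 'I_m -> R)
  (x : 'I_n -> R) : 'I_m -> R :=
  fun j => \sum_(e : Mon n q) a (e, j) * \prod_(i < n) x i ^+ (val e i : nat).

(* Main.v *)
Require Import Defs.
From mathcomp Require Import all_boot all_order all_algebra reals mpoly.
From mathcomp Require Import ordered_qelim qe_rcf.
Import Order.TTheory GRing.Theory Num.Theory.
Local Open Scope ring_scope.
Set Implicit Arguments.
Import ord.


Section T2P.
Variable R : realType.
Variable L : nat.

Fixpoint t2p (t : GRing.term R) : {mpoly R[L]} :=
  match t with
  | GRing.Var i => if insub i is Some j then 'X_j else 0
  | GRing.Const c => c%:MP
  | GRing.NatConst k => k%:R
  | GRing.Add a b => t2p a + t2p b
  | GRing.Opp a => - t2p a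
  | GRing.NatMul a k => t2p a *+ k
  | GRing.Mul a b => t2p a * t2p b
  | GRing.Inv a => 0
  | GRing.Exp a k => t2p a ^+ k
  end.

Definition envx (x : 'I_L -> R) : seq R :=
  mkseq (fun i => if insub i is Some j then x j else 0) L.

Lemma nth_envx x i : nth 0 (envx x) i = if insub i is Some j then x j else 0.
Proof.
case: (ltnP i L) => h.
  by rewrite nth_mkseq.
rewrite nth_default ?size_mkseq //.
by case: insubP => // u; rewrite ltnNge h.
Qed.

Lemma t2pE x t : GRing.rterm t -> (t2p t).@[x] = GRing.eval (envx x) t.
Proof.
elim: t => //=.
- by move=> i _; rewrite nth_envx; case: insub => [j|]; rewrite ?mevalXU ?meval0.
- by move=> c _; rewrite mevalC.
- by move=> k _; rewrite -mpolyC_nat mevalC.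
- by move=> a ha b hb /andP[ra rb]; rewrite mevalD ha ?hb.
- by move=> a ha ra; rewrite mevalN ha.
- by move=> a ha k ra; rewrite mevalMn ha.
- by move=> a ha b hb /andP[ra rb]; rewrite mevalM ha ?hb.
- move=> a ha k ra; rewrite -(ha ra); elim: k => [|k ih]; first by rewrite !expr0 meval1.
  by rewrite !exprS mevalM ih.
Qed.
End T2P.
Arguments envx {R L}.
Arguments t2p {R} L.


Section QE.
Variable R : rcfType.

Definition satw (e : seq R) (w : seq (GRing.term R) * seq (GRing.term R)) :=
  all (fun t => GRing.eval e t == 0) w.1%PAIR && all (fun t => 0 < GRing.eval e t) w.2%PAIR.

Lemma holds_w e ws : holds e (odnf_to_oform (map (@w_to_oclause R) ws)) <-> has (satw e) ws.
Proof.
elim: ws => [|w ws ih] /=; first by split.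
rewrite /satw ih.
have H1 l : holds e (foldr (fun t => And (t == 0)%oT) True l) <-> all (fun t => GRing.eval e t == 0) l.
  elim: l => [|t l ihl] //=; rewrite ihl; split; first by case=> /eqP -> ->.
  by case/andP=> /eqP -> ->.
have H2 l : holds e (foldr (fun t => And (0 <% t)%oT) True l) <-> all (fun t => 0 < GRing.eval e t) l.
  elim: l => [|t l ihl] //=; rewrite ihl; split; first by case=> -> ->.
  by case/andP=> -> ->.
rewrite H1 H2; split.
  by case=> [[-> [_ [-> _]]]|->]; rewrite ?orbT.
by case/orP=> [/andP[-> ->]|->]; [left|right].
Qed.

Lemma holds_bcs e bcs : holds e (odnf_to_oform bcs) <->
  has (satw e) (flatten (map (@oclause_to_w R) bcs)).
Proof.
elim: bcs => [|bc bcs ih]; first by split.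
rewrite (_ : flatten _ = oclause_to_w bc ++ flatten (map (@oclause_to_w R) bcs)) // has_cat.
have E: holds e (odnf_to_oform [:: bc]) <-> has (satw e) (oclause_to_w bc).
  by rewrite -holds_w -oclause_to_wP -oclause_neq_leq_elimP.
split.
  case/(odnf_to_oform_cat e [:: bc] bcs) => h; apply/orP; [left; exact/E | right; exact/ih].
case/orP => h; apply/(odnf_to_oform_cat e [:: bc] bcs); [left; exact/E | right; exact/ih].
Qed.

Lemma qe_sa (f : formula R) : exists ws : seq (seq (GRing.term R) * seq (GRing.term R)),
  all (fun w => all (@GRing.rterm R) w.1%PAIR && all (@GRing.rterm R) w.2%PAIR) ws /\
  forall e, holds e f <-> has (satw e) ws.
Proof.
set G := quantifier_elim (@wproj R) (to_rform f).
have wfG : qf_form G && rformula G.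
  exact: (quantifier_elim_wf (@wf_QE_wproj R) (to_rform_rformula f)).
set bcs := qf_to_odnf G false.
exists (flatten (map (@oclause_to_w R) bcs)); split.
  have : all (@dnf_rterm R) bcs by apply: qf_to_dnf_rterm; case/andP: wfG.
  elim: bcs => [|bc bcs ih] //= /andP[h1 h2]; rewrite all_cat ih // andbT.
  move: (dnf_rterm_subproof h1); apply: sub_all => w.
  by rewrite /dnf_rterm /= !andbT.
move=> e; rewrite -holds_bcs.
have -> : holds e f <-> qf_eval e G.
  by split => [/(rcf_satP e f)|/(rcf_satP e f)].
rewrite -(qf_to_dnfP e wfG).
by split => [/(qf_evalP _ (dnf_to_form_qf _))|/(qf_evalP _ (dnf_to_form_qf _))].
Qed.
End QE.


Section Gen.
Variable R : realType.

Lemma holds_bigAnd (T : finType) e (F : T -> ord.formula R) :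
  ord.holds e (\big[ord.And/ord.Bool true]_(i : T) F i) <-> forall i, ord.holds e (F i).
Proof.
suff H : forall r, ord.holds e (\big[ord.And/ord.Bool true]_(i <- r) F i) <->
   (forall i, i \in r -> ord.holds e (F i)).
  rewrite H; split => h i; [apply: h; exact: mem_index_enum | move=> _; exact: h].
elim=> [|x r ih]; rewrite ?big_nil ?big_cons /=; first by split.
rewrite ih; split.
  by case=> h1 h2 i; rewrite inE => /orP[/eqP -> //|]; apply: h2.
move=> h; split; first by apply: h; rewrite inE eqxx.
by move=> i hi; apply: h; rewrite inE hi orbT.
Qed.

Lemma holds_bigOr (T : finType) e (F : T -> ord.formula R) :
  ord.holds e (\big[ord.Or/ord.Bool false]_(i : T) F i) <-> exists i, ord.holds e (F i).
Proof.
suff H : forall r, ord.holds e (\big[ord.Or/ord.Bool false]_(i <- r) F i) <->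
   (exists2 i, i \in r & ord.holds e (F i)).
  rewrite H; split; [case=> i _ h; by exists i | case=> i h; exists i => //; exact: mem_index_enum].
elim=> [|x r ih]; rewrite ?big_nil ?big_cons /=; first by split => //; case.
rewrite ih; split.
  case=> [h|[i hi h]]; first by exists x; rewrite ?inE ?eqxx.
  by exists i; rewrite ?inE ?hi ?orbT.
case=> i; rewrite inE => /orP[/eqP -> h|hi h]; first by left.
by right; exists i.
Qed.

Definition FA (s : seq nat) (f : ord.formula R) := foldr (fun k g => ord.Forall k g) f s.

Lemma holds_FA e s f : ord.holds e (FA s f) <->
  forall e', (forall k, k \notin s -> nth 0 e' k = nth 0 e k) -> ord.holds e' f.
Proof.
elim: s e => [|k s ih] e /=.
  split; last by apply; move=> *.
  by move=> h e' he; apply: ord.eq_holds h => i; rewrite he.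
split.
  move=> h e' he; move/ih: (h (nth 0 e' k)); apply=> k' hk'.
  rewrite nth_set_nth /=; case: eqP => [->//|/eqP nk].
  by apply: he; rewrite inE negb_or nk.
move=> h x; apply/ih => e' he; apply: h => k'; rewrite inE negb_or => /andP[nk hk'].
by rewrite he // nth_set_nth /= (negbTE nk).
Qed.
End Gen.
Arguments FA {R}.


Section Spec.
Variable R : realType.
Variables n m q : nat.
Local Notation I := (Mon n q * 'I_m)%type.
Local Notation L := #|{: Mon n q * 'I_m}|.

Definition PT (j : 'I_m) (X : 'I_n -> GRing.term R) : GRing.term R :=
  \big[GRing.Add/GRing.Const 0]_(e : Mon n q)
     GRing.Mul (GRing.Var R (@enum_rank I (e, j)))
       (\big[GRing.Mul/GRing.Const 1]_(i < n) GRing.Exp (X i) (val e i)).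

Lemma evalPT env j X : GRing.eval env (PT j X) =
  \sum_(e : Mon n q) nth 0 env (@enum_rank I (e, j)) *
     \prod_(i < n) GRing.eval env (X i) ^+ (val e i).
Proof.
rewrite /PT (@big_morph _ _ (GRing.eval env) 0 +%R (GRing.Const 0) (@GRing.Add R)) //.
apply: eq_bigr => e _ /=; congr (_ * _).
by rewrite (@big_morph _ _ (GRing.eval env) 1 *%R (GRing.Const 1) (@GRing.Mul R)).
Qed.

Definition Xv (i : 'I_n) : GRing.term R := GRing.Var R (L.+1 + i).
Definition Zt (i : 'I_n) : GRing.term R := GRing.Const 0.

Definition Box : ord.formula R :=
  \big[ord.And/ord.Bool true]_(i < n)
     ord.And (ord.Lt (GRing.Opp (GRing.Var R L)) (Xv i)) (ord.Lt (Xv i) (GRing.Var R L)).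

Definition Dom : ord.formula R :=
  ord.And (\big[ord.And/ord.Bool true]_(j < m) ord.Le (PT j Zt) (PT j Xv))
          (\big[ord.Or/ord.Bool false]_(j < m) ord.Lt (PT j Zt) (PT j Xv)).

Definition Fm : ord.formula R :=
  ord.Exists L (ord.And (ord.Lt (GRing.Const 0) (GRing.Var R L))
     (FA (iota L.+1 n) (ord.Implies Box (ord.Not Dom)))).

Lemma body_sem (y : 'I_L -> R) (e' : seq R) (eps : R) (x : 'I_n -> R) :
  (forall k, (k < L)%N -> nth 0 e' k = nth 0 (envx y) k) ->
  nth 0 e' L = eps -> (forall i : 'I_n, nth 0 e' (L.+1 + i) = x i) ->
  (ord.holds e' (ord.Implies Box (ord.Not Dom)) <->
   ((forall i, `|x i - (fun _ => 0) i| < eps) ->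
     ~ dominates (fpoly (fun p : I => y (enum_rank p))) x (fun _ => 0))).
Proof.
move=> hA hB hX.
have hP j X : GRing.eval e' (PT j X) = fpoly (fun p : I => y (enum_rank p))
    (fun i => GRing.eval e' (X i)) j.
  rewrite evalPT /fpoly; apply: eq_bigr => e _; congr (_ * _).
  by rewrite hA // nth_envx valK.
have ePX j : GRing.eval e' (PT j Xv) = fpoly (fun p : I => y (enum_rank p)) x j.
  rewrite hP /fpoly; apply: eq_bigr => e _; congr (_ * _).
  by apply: eq_bigr => i _ /=; rewrite hX.
have ePZ j : GRing.eval e' (PT j Zt) =
    fpoly (fun p : I => y (enum_rank p)) (fun _ => 0) j by rewrite hP.
rewrite /= /Box /Dom holds_bigAnd.
have -> : (forall i : 'I_n, ord.holds e' (ord.And (ord.Lt (GRing.Opp (GRing.Var R L)) (Xv i))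
            (ord.Lt (Xv i) (GRing.Var R L)))) <-> (forall i, `|x i - 0| < eps).
  split => h i; move: (h i) => /=; rewrite subr0 ltr_norml hB hX.
    by case=> -> ->.
  by case/andP=> -> ->.
rewrite /dominates; split => h hb hd; apply: (h hb).
  split; first by apply/holds_bigAnd => j /=; rewrite ePX ePZ; case: hd => ->.
  by apply/holds_bigOr; case: hd => _ [j hj]; exists j => /=; rewrite ePX ePZ.
case: hd => /holds_bigAnd h1 /holds_bigOr [j hj]; split.
  by move=> i; move: (h1 i) => /=; rewrite ePX ePZ.
by exists j; move: hj => /=; rewrite ePX ePZ.
Qed.

Lemma Fm_sem (y : 'I_L -> R) : ord.holds (envx y) Fm <->
  local_pareto (fpoly (fun p : I => y (enum_rank p))) (fun _ => 0).
Proof.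
pose e1 eps := set_nth 0 (envx y) L eps.
have e1L eps : nth 0 (e1 eps) L = eps by rewrite nth_set_nth /= eqxx.
have e1k eps k : (k < L)%N -> nth 0 (e1 eps) k = nth 0 (envx y) k.
  by move=> hk; rewrite nth_set_nth /= (ltn_eqF hk).
have e1big eps k : (L < k)%N -> nth 0 (e1 eps) k = 0.
  move=> hk; rewrite nth_default // size_set_nth size_mkseq.
  by rewrite (maxn_idPl (leqnSn _)).
rewrite /Fm /=; split.
  case=> eps [h0 /holds_FA h]; exists eps; first by rewrite -/(e1 eps) e1L in h0.
  move=> x hx.
  pose e' := mkseq (fun k => if (k < L.+1)%N then nth 0 (e1 eps) k
                   else if insub (k - L.+1)%N is Some i then x i else 0) (L.+1 + n).
  have he' : forall k, k \notin iota L.+1 n -> nth 0 e' k = nth 0 (e1 eps) k.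
    move=> k; rewrite mem_iota negb_and -ltnNge -leqNgt => /orP[hk|hk].
      by rewrite nth_mkseq ?hk //; apply: leq_trans hk (leq_addr _ _).
    rewrite nth_default ?size_mkseq // e1big //.
    by apply: leq_trans hk; apply: leq_addr.
  have := h e' he'; move/(@body_sem y e' eps x); apply => //.
  - move=> k hk; rewrite nth_mkseq; last by apply: ltn_trans (ltn_addr _ (ltnSn _)).
    by rewrite ltnS (ltnW hk) e1k.
  - by rewrite nth_mkseq ?ltnSn ?e1L // ltn_addr.
  - move=> i; rewrite nth_mkseq ?ltn_add2l //.
    by rewrite ltnNge leq_addr /= addKn valK.
case=> eps h0 h; exists eps; split; first by rewrite /= -/(e1 eps) e1L.
apply/holds_FA => e' he'.
apply/(@body_sem y e' eps (fun i => nth 0 e' (L.+1 + i))) => //.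
- move=> k hk; rewrite he' ?e1k // mem_iota; apply/negP => /andP[h1 _].
  by have := leq_trans h1 (ltnW hk); rewrite ltnn.
- by rewrite he' ?e1L // mem_iota ltnn.
- exact: h.
Qed.
End Spec.

Theorem mainTheorem3 (R : realType) (n m q : nat) :
  (0 < n)%N -> (0 < m)%N -> (0 < q)%N ->
  semialgebraicT (fun a : Mon n q * 'I_m -> R =>
                    local_pareto (fpoly a) (fun _ => 0)).
Proof.
move=> _ _ _; rewrite /semialgebraicT /semialgebraic.
have [ws [hr hw]] := @qe_sa R (Fm R n m q).
exists (map (fun w => (map (t2p #|{: Mon n q * 'I_m}|) w.1%PAIR,
                       map (t2p #|{: Mon n q * 'I_m}|) w.2%PAIR)) ws).
move=> y /=.
rewrite -(@Fm_sem R n m q y) hw.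
suff -> : has (satw R (envx y)) ws = has (fun PQ => basic_sa_pt PQ y)
   (map (fun w => (map (t2p #|{: Mon n q * 'I_m}|) w.1%PAIR,
                       map (t2p #|{: Mon n q * 'I_m}|) w.2%PAIR)) ws) by [].
rewrite has_map; apply: eq_in_has => w /(allP hr) /andP[h1 h2].
rewrite /basic_sa_pt /satw /= !all_map; congr andb.
  by apply: eq_in_all => t ht /=; rewrite t2pE //; apply: (allP h1).
by apply: eq_in_all => t ht /=; rewrite t2pE //; apply: (allP h2).
Qed.
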